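(* If $X$ is a second-countable well-filtered space, then the upper Vietoris topology and the Scott topology on $\mathsf{K}(X)$ coincide.
   Context: Spaces are $T_0$; specialization order $x\le y$ iff $x\in\overline{\{y\}}$; saturated = upper set. $\mathsf{K}(X)$ = nonempty compact saturated subsets ordered by reverse inclusion. Scott topology on a poset: upper sets $U$ such that every directed $D$ whose supremum exists and lies in $U$ meets $U$. Upper Vietoris topology on $\mathsf{K}(X)$: base $\Box U=\{K:K\subseteq U\}$, $U$ open. Well-filtered: for open $U$ and $\mathcal K\subseteq\mathsf{K}(X)$ filtered under inclusion, $\bigcap\mathcal K\subseteq U$ implies some $K\in\mathcal K$ lies in $U$. *)

(* Defs.v *)
From Stdlib Require Import List Classical.

Record TopSpace := {
  carrier :> Type;
  is_open : (carrier -> Prop) -> Prop;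
  open_full : is_open (fun _ => True);
  open_inter : forall U V, is_open U -> is_open V -> is_open (fun x => U x /\ V x);
  open_union : forall F : (carrier -> Prop) -> Prop,
      (forall U, F U -> is_open U) -> is_open (fun x => exists U, F U /\ U x);
  open_ext : forall U V, is_open U -> (forall x, U x <-> V x) -> is_open V
}.

Section Defs.
Variable X : TopSpace.

Definition subset (A B : X -> Prop) : Prop := forall x, A x -> B x.

Definition T0 : Prop :=
  forall x y : X, (forall U, is_open X U -> (U x <-> U y)) -> x = y.

Definition spec_le (x y : X) : Prop :=
  forall U, is_open X U -> U x -> U y.

Definition saturated (A : X -> Prop) : Prop :=
  forall x y, A x -> spec_le x y -> A y.

Definition compact (K : X -> Prop) : Prop :=
  forall F : (X -> Prop) -> Prop,
    (forall U, F U -> is_open X U) ->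
    (forall x, K x -> exists U, F U /\ U x) ->
    exists l : list (X -> Prop), Forall F l /\
      (forall x, K x -> exists U, In U l /\ U x).

(* elements of K(X): nonempty compact saturated subsets *)
Definition inK (K : X -> Prop) : Prop :=
  (exists x, K x) /\ compact K /\ saturated K.

Definition second_countable : Prop :=
  exists B : nat -> (X -> Prop),
    (forall n, is_open X (B n)) /\
    (forall U, is_open X U -> forall x, U x -> exists n, B n x /\ subset (B n) U).

Definition filtered (D : (X -> Prop) -> Prop) : Prop :=
  (exists K, D K) /\
  (forall K1 K2, D K1 -> D K2 -> exists K3, D K3 /\ subset K3 K1 /\ subset K3 K2).

Definition well_filtered : Prop :=
  forall (U : X -> Prop) (KK : (X -> Prop) -> Prop),
    is_open X U ->
    (forall K, KK K -> inK K) ->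
    filtered KK ->
    subset (fun x => forall K, KK K -> K x) U ->
    exists K, KK K /\ subset K U.

(* Subsets of K(X) are represented by predicates on subsets of X; only their
   values on elements of K(X) matter.  K(X) is ordered by reverse inclusion:
   K1 <= K2 iff K2 ⊆ K1. *)

(* upper Vietoris topology: generated by the base Box U = {K : K ⊆ U}, U open *)
Definition upper_vietoris_open (O : (X -> Prop) -> Prop) : Prop :=
  forall K, inK K -> O K ->
    exists U, is_open X U /\ subset K U /\
      (forall K', inK K' -> subset K' U -> O K').

Definition is_sup_K (D : (X -> Prop) -> Prop) (S : X -> Prop) : Prop :=
  inK S /\ (forall K, D K -> subset S K) /\
  (forall T, inK T -> (forall K, D K -> subset T K) -> subset T S).

Definition scott_open (O : (X -> Prop) -> Prop) : Prop :=
  (forall K K', inK K -> inK K' -> O K -> subset K' K -> O K') /\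
  (forall D : (X -> Prop) -> Prop,
     (forall K, D K -> inK K) -> filtered D ->
     forall S, is_sup_K D S -> O S -> exists K, D K /\ O K).

End Defs.

(* Main.v *)
Require Import Defs.
From Stdlib Require Import List Classical.
From Stdlib Require Import Arith Lia IndefiniteDescription.

Section Helpers.
Variable X : TopSpace.

Lemma open_empty : is_open X (fun _ => False).
Proof.
  apply (open_ext X (fun x => exists U, (fun _ : X -> Prop => False) U /\ U x)).
  - apply open_union; intros U H; destruct H.
  - intros x; split; [intros [U [[] _]] | intros []].
Qed.

Lemma open_imp (P : Prop) (W : X -> Prop) : is_open X W -> is_open X (fun x => P -> W x).
Proof.
  intros HW. destruct (classic P) as [p|np].
  - apply (open_ext X W); auto. intros x; split; auto.
  - apply (open_ext X (fun _ => True)); [apply open_full|]. intros x; split; tauto.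
Qed.

Lemma open_list (l : list (X -> Prop)) : Forall (is_open X) l ->
  is_open X (fun x => exists U, In U l /\ U x).
Proof.
  intros H. apply open_union. intros U HU. rewrite Forall_forall in H. auto.
Qed.

Lemma compact_ext (A B : X -> Prop) : compact X A -> (forall x, A x <-> B x) -> compact X B.
Proof.
  intros HA E F HF Hc. destruct (HA F HF) as [l [Hl Hl2]].
  - intros x Ax. apply Hc. apply E; auto.
  - exists l; split; auto. intros x Bx. apply Hl2. apply E; auto.
Qed.

Lemma compact_emp : compact X (fun _ => False).
Proof. intros F _ _. exists nil. split; auto. intros x []. Qed.

Lemma compact_union (A B : X -> Prop) : compact X A -> compact X B ->
  compact X (fun x => A x \/ B x).
Proof.
  intros HA HB F HF Hc.
  destruct (HA F HF) as [l1 [H1 H1']]; [intros x Ax; apply Hc; auto|].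
  destruct (HB F HF) as [l2 [H2 H2']]; [intros x Bx; apply Hc; auto|].
  exists (l1 ++ l2). split; [apply Forall_app; auto|].
  intros x [Ax|Bx].
  - destruct (H1' x Ax) as [U [i u]]. exists U; split; auto. apply in_or_app; auto.
  - destruct (H2' x Bx) as [U [i u]]. exists U; split; auto. apply in_or_app; auto.
Qed.

Lemma compact_fin (P : nat -> Prop) (Kf : nat -> X -> Prop) : forall N,
  (forall m, m < N -> P m -> compact X (Kf m)) ->
  compact X (fun x => exists m, m < N /\ P m /\ Kf m x).
Proof.
  induction N; intros H.
  - apply (compact_ext _ _ compact_emp). intros x; split; [intros []|intros [m [Hm _]]; lia].
  - apply (compact_ext (fun x => (exists m, m < N /\ P m /\ Kf m x) \/ (P N /\ Kf N x))).
    + apply compact_union. apply IHN; intros; apply H; auto; lia.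
      destruct (classic (P N)) as [p|np].
      * apply (compact_ext (Kf N)); [apply H; auto|]. intros; tauto.
      * apply (compact_ext _ _ compact_emp). intros; tauto.
    + intros x; split.
      * intros [[m [a [b c]]]|[a b]]; exists m || exists N; repeat split; auto; lia.
      * intros [m [a [b c]]]. destruct (Nat.eq_dec m N) as [->|ne]; [right; auto|].
        left; exists m; repeat split; auto; lia.
Qed.

End Helpers.

Theorem mainTheorem16 (X : TopSpace) :
  T0 X -> second_countable X -> well_filtered X ->
  forall O : (X -> Prop) -> Prop,
    upper_vietoris_open X O <-> scott_open X O.
Proof.
  intros _ [B [HBo HB]] WF O. split.
  -
    intros UV. split.
    + intros K K' HK HK' OK sub. destruct (UV K HK OK) as [U [Uo [KU box]]].
      apply box; auto. intros x Hx; auto.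
    + intros D HD Dfilt S [HS [Slow Sgr]] OS.
      destruct (UV S HS OS) as [U [Uo [SU box]]].
      set (I := fun x => forall K, D K -> K x).
      assert (IK : inK X I).
      { split; [|split].
        - apply NNPP; intros ne.
          assert (sub0 : subset X I (fun _ => False)) by (intros x Ix; apply ne; exists x; auto).
          destruct (WF (fun _ => False) D (open_empty X) HD Dfilt sub0) as [K [DK KE]].
          destruct (HD K DK) as [[x Kx] _]. exact (KE x Kx).
        - intros F HF Hc.
          destruct (WF (fun x => exists U, F U /\ U x) D (open_union X F HF) HD Dfilt Hc)
            as [K [DK KG]].
          destruct (HD K DK) as [_ [Kc _]]. destruct (Kc F HF KG) as [l [Hl Hl']].
          exists l; split; auto. intros x Ix. apply Hl'. apply Ix; auto.
        - intros x y Ix le K DK. destruct (HD K DK) as [_ [_ Ks]]. apply (Ks x); [exact (Ix K DK)|exact le]. }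
      assert (IS : subset X I S) by (apply Sgr; auto; intros K DK x Ix; apply Ix; auto).
      assert (IU : subset X (fun x => forall K, D K -> K x) U) by (intros x Ix; apply SU, IS; exact Ix).
      destruct (WF U D Uo HD Dfilt IU) as [K [DK KU]].
      exists K; split; [exact DK| apply box; auto].
  -
    intros [Oup Osc] K HK OK.
    apply NNPP; intro NE.
    destruct HK as [[x0 Kx0] [Kc Ks]].
    set (W := fun n x => exists i, Nat.testbit n i = true /\ B i x).
    assert (Wo : forall n, is_open X (W n)).
    { intros n. apply (open_ext X (fun x => exists U, (fun V => exists i, Nat.testbit n i = true /\ V = B i) U /\ U x)).
      - apply open_union. intros U [i [_ ->]]. apply HBo.
      - intros x; split.
        + intros [U [[i [t ->]] u]]. exists i; auto.
        + intros [i [t b]]. exists (B i); split; eauto. }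
    assert (Wcof : forall U, is_open X U -> subset X K U ->
                   exists n, subset X K (W n) /\ subset X (W n) U).
    { intros U Uo KU.
      destruct (Kc (fun V => exists i, V = B i /\ subset X (B i) U)) as [l [Hl Hl']].
      - intros V [i [-> _]]. apply HBo.
      - intros x Kx. destruct (HB U Uo x (KU x Kx)) as [i [bi sub]]. exists (B i); eauto.
      - assert (G : exists n, (forall i, Nat.testbit n i = true -> subset X (B i) U) /\
                      (forall V, In V l -> exists i, Nat.testbit n i = true /\ V = B i)).
        { clear Hl'. induction l as [|V l IH].
          - exists 0. split. intros i t; rewrite Nat.bits_0 in t; discriminate.
            intros V [].
          - inversion Hl as [|? ? [i0 [-> s0]] Hl2]; subst.
            destruct (IH Hl2) as [n [A1 A2]].
            exists (Nat.setbit n i0). split.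
            + intros i t. apply Nat.setbit_iff in t. destruct t as [<-|t]; auto.
            + intros V [<-|iV].
              * exists i0; split; auto. apply Nat.setbit_iff; auto.
              * destruct (A2 V iV) as [i [t e]]. exists i; split; auto.
                apply Nat.setbit_iff; auto. }
        destruct G as [n [G1 G2]]. exists n; split.
        + intros x Kx. destruct (Hl' x Kx) as [V [iV Vx]].
          destruct (G2 V iV) as [i [t ->]]. exists i; auto.
        + intros x [i [t b]]. exact (G1 i t x b). }
    set (V := fun n x => forall j, j <= n -> subset X K (W j) -> W j x).
    assert (Vo : forall n, is_open X (V n)).
    { induction n.
      - apply (open_ext X (fun x => subset X K (W 0) -> W 0 x)); [apply open_imp; auto|].
        intros x; split.
        + intros h j hj; assert (j = 0) by lia; subst; auto.
        + intros h; apply h; auto.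
      - apply (open_ext X (fun x => V n x /\ (subset X K (W (S n)) -> W (S n) x))).
        + apply open_inter; auto. apply open_imp; auto.
        + intros x; split.
          * intros [h1 h2] j hj. destruct (Nat.eq_dec j (S n)) as [->|ne]; auto.
            apply h1; lia.
          * intros h; split; [intros j hj; apply h; lia| apply h; auto]. }
    assert (KV : forall n, subset X K (V n)) by (intros n x Kx j _ s; auto).
    assert (ch : forall n, exists K', inK X K' /\ subset X K' (V n) /\ ~ O K').
    { intros n. apply NNPP; intros h. apply NE. exists (V n); repeat split; auto.
      intros K' HK' sub. apply NNPP; intros nO. apply h. exists K'; auto. }
    apply functional_choice in ch. destruct ch as [Kf HKf].
    assert (ev : forall U, is_open X U -> subset X K U ->
                 exists N, forall m, N <= m -> subset X (Kf m) U).
    { intros U Uo KU. destruct (Wcof U Uo KU) as [j [KW WU]]. exists j.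
      intros m hm x Kx. destruct (HKf m) as [_ [sub _]].
      apply WU. apply (sub x Kx); auto. }
    set (L := fun n x => K x \/ exists m, n <= m /\ Kf m x).
    assert (LK : forall n, inK X (L n)).
    { intros n. split; [|split].
      - exists x0; left; auto.
      - intros F HF Hc.
        destruct (Kc F HF) as [l1 [H1 H1']]; [intros x Kx; apply Hc; left; auto|].
        destruct (ev _ (open_list X l1 (Forall_impl _ HF H1)) H1') as [N HN].
        destruct (compact_fin X (fun m => n <= m) Kf N
                    (fun m _ _ => proj1 (proj2 (proj1 (HKf m)))) F HF) as [l2 [H2 H2']].
        + intros x [m [a [b c]]]. apply Hc. right; exists m; auto.
        + exists (l1 ++ l2); split; [apply Forall_app; auto|].
          intros x [Kx|[m [hm Kmx]]].
          * destruct (H1' x Kx) as [U [i u]]; exists U; split; auto; apply in_or_app; auto.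
          * destruct (le_lt_dec N m) as [le|lt].
            -- destruct (HN m le x Kmx) as [U [i u]]; exists U; split; auto; apply in_or_app; auto.
            -- destruct (H2' x) as [U [i u]]; [exists m; auto|].
               exists U; split; auto; apply in_or_app; auto.
      - intros x y [Kx|[m [hm Kmx]]] le.
        + left; apply (Ks x); auto.
        + right; exists m; split; auto. destruct (HKf m) as [[_ [_ s]] _]. apply (s x); auto. }
    set (D := fun L' => exists n, L' = L n).
    destruct (Osc D) with (S := K) as [L' [[n ->] OL]].
    + intros L' [n ->]; auto.
    + split; [exists (L 0); exists 0; auto|].
      intros K1 K2 [n1 ->] [n2 ->]. exists (L (max n1 n2)); split; [eexists; eauto|].
      split; intros x; unfold L; intros [Kx|[m [hm Kmx]]];
        solve [left; exact Kx | right; exists m; split; [lia|exact Kmx]].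
    + split; [split; [exists x0; auto|split; auto]|split].
      * intros L' [n ->] x Kx; left; auto.
      * intros T HT low x Tx. apply NNPP; intros nK.
        set (U := fun y => exists V0, (is_open X V0 /\ ~ V0 x) /\ V0 y).
        assert (Uo : is_open X U) by (apply open_union; intros V0 [h _]; auto).
        assert (KU : subset X K U).
        { intros y Ky. apply NNPP; intros nU. apply nK. apply (Ks y); auto.
          intros V0 V0o V0y. apply NNPP; intros nV. apply nU. exists V0; auto. }
        destruct (ev U Uo KU) as [N HN].
        destruct (low (L N) (ex_intro _ N eq_refl) x Tx) as [Kx|[m [hm Kmx]]]; [auto|].
        destruct (HN m hm x Kmx) as [V0 [[_ nV] V0x]]. auto.
    + auto.
    + destruct (HKf n) as [HKn [_ nO]]. apply nO.
      apply (Oup (L n)); auto. intros x Kx; right; exists n; auto.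
Qed.
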